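(* Let $A$ be a real symmetric matrix with $\mathrm{Tr}(A^2)=1$, let $q\in\mathbb{N}$, and let $\rho(A)=\max\{|\lambda|:\lambda\in\mathrm{spec}(A)\}$. If $\rho(A)\le 1/q$, then $$\mathcal{R}_q(A)\ge\prod_{k=1}^{q-1}\big(1-k\rho(A)\big).$$
   Context: For a real symmetric matrix $A$ with eigenvalues $(\lambda_i)$ (with multiplicity), $\mathcal{R}_q(A)=\sum\lambda_{i_1}^2\cdots\lambda_{i_q}^2$, the sum over ordered $q$-tuples of pairwise distinct indices. *)

(* Defs.v *)
From mathcomp Require Import all_boot all_order all_algebra.
From mathcomp Require Import reals.
Set Implicit Arguments. Unset Strict Implicit. Unset Printing Implicit Defensive.
Import Order.TTheory GRing.Theory Num.Theory.
Local Open Scope ring_scope.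

(* [spectrum A lam]: lam lists the eigenvalues of A with multiplicity,
   i.e. the characteristic polynomial of A factors as prod_i ('X - lam_i). *)
Definition spectrum (R : ringType) (n : nat) (A : 'M[R]_n) (lam : 'I_n -> R) : Prop :=
  char_poly A = \prod_(i < n) ('X - (lam i)%:P).

Definition Rq (R : ringType) (n q : nat) (lam : 'I_n -> R) : R :=
  \sum_(f : {ffun 'I_q -> 'I_n} | injectiveb f) \prod_(k < q) (lam (f k)) ^+ 2.

Definition specrad (R : realDomainType) (n : nat) (lam : 'I_n -> R) : R :=
  \big[Num.max/0]_(i < n) `|lam i|.

(* Main.v *)
Require Import Defs.
From mathcomp Require Import all_boot all_order all_algebra.
From mathcomp Require Import reals.
From mathcomp Require Import lra.
Import Order.TTheory GRing.Theory Num.Theory.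
Local Open Scope ring_scope.
Set Implicit Arguments. Unset Strict Implicit.

Section P.
Variable R : comNzRingType.

Lemma cpmx_sq n (A : 'M[R]_n) :
  map_mx (comp_poly ('X^2)) (char_poly_mx (A *m A)) =
  char_poly_mx A *m ('X%:M + map_mx polyC A).
Proof.
rewrite /char_poly_mx mulmxBl !mulmxDr mul_mx_scalar mul_scalar_mx.
have -> : map_mx (comp_poly 'X^2) ('X%:M - map_mx polyC (A *m A)) =
   ('X^2)%:M - map_mx polyC (A *m A).
  apply/matrixP => i j; rewrite !mxE; case: (i == j) => /=;
  by rewrite ?mulr1n ?mulr0n ?comp_polyB ?comp_polyX ?comp_polyC ?comp_poly0.
rewrite map_mxM -mul_mx_scalar -scalar_mxM -expr2.
rewrite mul_mx_scalar opprD addrA addrK.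
by [].
Qed.
End P.

Section P.
Variable R : comNzRingType.

Lemma comp_inj2 (p q : {poly R}) : p \Po 'X^2 = q \Po 'X^2 -> p = q.
Proof.
move=> e; apply/polyP => i.
have := congr1 (fun r : {poly R} => r`_(i * 2)%N) e => /=.
by rewrite !coef_comp_poly_Xn // dvdn_mull // mulnK.
Qed.

Lemma det_plus n (A : 'M[R]_n) :
  \det ('X%:M + map_mx polyC A) = (-1) ^+ n * (char_poly A \Po - 'X).
Proof.
have h : map_mx (comp_poly (- 'X)) (char_poly_mx A) = (-1) *: ('X%:M + map_mx polyC A).
  apply/matrixP => i j; rewrite !mxE; case: (i == j) => /=;
  rewrite ?mulr1n ?mulr0n ?comp_polyB ?comp_polyX ?comp_polyC ?comp_poly0 ?add0r ?sub0r;
  by rewrite mulN1r // opprD.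
have := det_map_mx (comp_poly (- 'X)) (char_poly_mx A).
rewrite h detZ /= -/(char_poly A) => <-.
by rewrite mulrA -exprD -signr_odd oddD addbb mul1r.
Qed.

Lemma char_poly_sq n (A : 'M[R]_n) (lam : 'I_n -> R) :
  char_poly A = \prod_(i < n) ('X - (lam i)%:P) ->
  char_poly (A *m A) = \prod_(i < n) ('X - (lam i ^+ 2)%:P).
Proof.
move=> hA; apply: comp_inj2.
have := det_map_mx (comp_poly ('X^2)) (char_poly_mx (A *m A)).
rewrite cpmx_sq det_mulmx det_plus /= -/(char_poly (A *m A)) -/(char_poly A) => <-.
rewrite hA rmorph_prod /=.
have -> : \prod_(i < n) (('X - (lam i)%:P) \Po - 'X) = \prod_(i < n) -('X + (lam i)%:P).
  by apply: eq_bigr => i _; rewrite comp_polyB comp_polyX comp_polyC opprD.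
rewrite prodrN card_ord [X in _ * X]mulrA -exprD -signr_odd oddD addbb mul1r -big_split /=.
rewrite rmorph_prod /=; apply: eq_bigr => i _.
by rewrite comp_polyB comp_polyX comp_polyC rmorphXn -subr_sqr.
Qed.
End P.

Lemma sum_sq (R : comNzRingType) n (A : 'M[R]_n) (lam : 'I_n -> R) : (0 < n)%N ->
  char_poly A = \prod_(i < n) ('X - (lam i)%:P) ->
  \sum_(i < n) lam i ^+ 2 = \tr (A *m A).
Proof.
move=> n0 /char_poly_sq hA.
have := char_poly_trace (A *m A) n0.
rewrite hA => e; rewrite -[\tr _]opprK -e.
have := @coefPn_prod_XsubC R [seq lam i ^+ 2 | i <- enum 'I_n].
rewrite size_map size_enum_ord -lt0n n0 => /(_ isT).
rewrite !big_map -!enumT !big_enum /= => ->.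
by rewrite opprK.
Qed.

Section C.
Variable R : realDomainType.
Variable n : nat.
Variable s : 'I_n -> R.

Definition S q := \sum_(f : {ffun 'I_q -> 'I_n} | injectiveb f) \prod_(k < q) s (f k).

Definition hh q (p : {ffun 'I_q -> 'I_n} * 'I_n) : {ffun 'I_q.+1 -> 'I_n} :=
  [ffun k => if unlift ord_max k is Some k' then p.1 k' else p.2].

Definition gg q (F : {ffun 'I_q.+1 -> 'I_n}) : {ffun 'I_q -> 'I_n} * 'I_n :=
  ([ffun k => F (lift ord_max k)], F ord_max).

Lemma hh_bij q : bijective (@hh q).
Proof.
exists (@gg q).
  case=> f j; rewrite /gg /hh /=; congr pair; last by rewrite ffunE unlift_none.
  by apply/ffunP => k; rewrite !ffunE liftK.
move=> F; apply/ffunP => k; rewrite /gg /hh !ffunE /=.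
by case: unliftP => [k' ->|->]; rewrite ?ffunE.
Qed.

Lemma hh_inj q f j : injectiveb (@hh q (f, j)) = injectiveb f && (j \notin codom f).
Proof.
apply/injectiveP/andP.
  move=> Hi; split.
    apply/injectiveP => a b e; apply: (@lift_inj _ ord_max); apply: Hi.
    by rewrite !ffunE !liftK /=.
  apply/negP => /codomP [a ea]; have := Hi ord_max (lift ord_max a).
  rewrite !ffunE unlift_none liftK /= => /(_ ea) e.
  by have := neq_lift ord_max a; rewrite -e eqxx.
case=> /injectiveP Hf Hj a b; rewrite !ffunE /=.
case: unliftP => [a' ->|->]; case: unliftP => [b' ->|->] //.
- by move/Hf ->.
- by move=> e; case/negP: Hj; rewrite -e codom_f.
- by move=> e; case/negP: Hj; rewrite e codom_f.
Qed.

Lemma S_rec q : S q.+1 = \sum_(f : {ffun 'I_q -> 'I_n} | injectiveb f)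
   (\prod_(k < q) s (f k)) * \sum_(j | j \notin codom f) s j.
Proof.
rewrite /S (reindex (@hh q)); last by apply: onW_bij; apply: hh_bij.
rewrite (@eq_bigl _ _ _ _ _ _ (fun p : {ffun 'I_q -> 'I_n} * 'I_n => injectiveb p.1 && (p.2 \notin codom p.1))); last first.
  by case=> f j; rewrite hh_inj.
rewrite (eq_bigr (fun p : {ffun 'I_q -> 'I_n} * 'I_n => \prod_(k<q.+1) s (hh (p.1,p.2) k))); last by case.
rewrite -(pair_big_dep (fun f : {ffun 'I_q -> 'I_n} => injectiveb f) (fun f j => j \notin codom f) (fun f j => \prod_(k<q.+1) s (hh (f,j) k))) /=.
apply: eq_bigr => f _; rewrite mulr_sumr; apply: eq_bigr => j _.
rewrite big_ord_recr /= {2}/hh ffunE unlift_none /=; congr (_ * _); apply: eq_bigr => k _.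
have -> : widen_ord (leqnSn q) k = lift ord_max k by apply/val_inj; rewrite /= /bump leqNgt ltn_ord.
by rewrite ffunE liftK.
Qed.
End C.

Section D.
Variable R : realDomainType.
Variable n : nat.
Variable s : 'I_n -> R.
Variable rho : R.
Hypothesis hs0 : forall i, 0 <= s i.
Hypothesis hsum : \sum_i s i = 1.
Hypothesis hrho : 0 <= rho.
Hypothesis hsr : forall i, s i <= rho ^+ 2.

Lemma S0 : S s 0 = 1.
Proof.
pose f0 : {ffun 'I_0 -> 'I_n} := ffun0 (card_ord 0).
rewrite /S (big_pred1 f0).
  by rewrite big_ord0.
move=> f /=; have -> : f == f0 by apply/eqP/ffunP => -[].
by apply/injectiveP => -[].
Qed.

Lemma S_ge0 q : 0 <= S s q.
Proof. by apply: sumr_ge0 => f _; apply: prodr_ge0 => k _. Qed.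

Lemma notin_bound q (f : {ffun 'I_q -> 'I_n}) : injective f ->
  1 - q%:R * rho ^+ 2 <= \sum_(j | j \notin codom f) s j.
Proof.
move=> fi.
have e : \sum_i s i = \sum_(j in codom f) s j + \sum_(j | j \notin codom f) s j.
  by rewrite (bigID (fun j => j \in codom f)).
rewrite hsum in e.
have le : \sum_(j | j \in codom f) s j <= q%:R * rho ^+ 2.
  apply: le_trans (_ : \sum_(j in codom f) rho ^+ 2 <= _).
    by apply: ler_sum => j _.
  by rewrite sumr_const card_codom // card_ord mulr_natl.
lra.
Qed.

Lemma S_bound q : q%:R * rho <= 1 -> \prod_(1 <= k < q) (1 - k%:R * rho) <= S s q.
Proof.
elim: q => [_|q IH hq]; first by rewrite big_geq // S0.
have q0 : 0 <= q%:R :> R by rewrite ler0n.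
rewrite -[q.+1]addn1 natrD mulrDl mul1r in hq.
have hq' : q%:R * rho <= 1 by nra.
have r1 : rho <= 1 by nra.
have c0 : 0 <= 1 - q%:R * rho by lra.
apply: (@le_trans _ _ (S s q * (1 - q%:R * rho))).
  case: q IH hq q0 hq' c0 {r1} => [|q] IH hq q0 hq' c0.
    by rewrite big_geq // S0 mul0r subr0 mulr1.
  by rewrite big_nat_recr //=; apply: ler_wpM2r => //; apply: IH.
rewrite S_rec /S mulr_suml; apply: ler_sum => f /injectiveP fi.
apply: ler_wpM2l; first by apply: prodr_ge0.
apply: le_trans (notin_bound fi).
have h : 0 <= q%:R * rho * (1 - rho) by rewrite !mulr_ge0 // subr_ge0.
nra.
Qed.
End D.
Unset Implicit Arguments. Set Strict Implicit.

Theorem lemma4p2 (R : realType) (n q : nat) (A : 'M[R]_n) (lam : 'I_n -> R) :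
  A^T = A ->
  spectrum A lam ->
  \tr (A *m A) = 1 ->
  q%:R * specrad lam <= 1 ->
  Rq q lam >= \prod_(1 <= k < q) (1 - k%:R * specrad lam).
Proof.
move=> _ hsp htr hq.
have n0 : (0 < n)%N.
  case: n A lam hsp htr hq => // A lam _.
  by rewrite /mxtrace big_ord0 => /eqP; rewrite eq_sym oner_eq0.
have hle : forall i, `|lam i| <= specrad lam.
  by move=> i; rewrite /specrad (bigD1 i) //= le_max lexx.
have hr0 : 0 <= specrad lam.
  by rewrite /specrad; elim/big_ind: _ => // x y hx hy; rewrite le_max hx.
have hsum := sum_sq n0 hsp; rewrite htr in hsum.
have hs0 : forall i, 0 <= (fun i => lam i ^+ 2) i by move=> i; apply: sqr_ge0.
have hsr : forall i, (fun i => lam i ^+ 2) i <= specrad lam ^+ 2.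
  move=> i; have := hle i; have := normr_ge0 (lam i).
  rewrite /= -(real_normK (num_real (lam i))); nra.
exact: (S_bound hs0 hsum hr0 hsr hq).
Qed.
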